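(* Let $n=p_1^{m_1}\cdots p_k^{m_k}$ be such that $\mathcal E_{\mathbb Z_n}$ has at least two vertices (i.e. $n$ is neither prime nor the square of a prime). Then the complement graph $\overline{\mathcal E_{\mathbb Z_n}}$ is connected if and only if $n=p_1p_2\cdots p_k$ is squarefree with $k\ge 3$.
   Context: Primes $p_1<\dots<p_k$, positive integers $m_i$. The essential ideal graph $\mathcal E_{\mathbb Z_n}$ has vertices the nonzero proper ideals of $\mathbb Z_n$, with distinct $I,K$ adjacent iff $I+K$ is essential (an ideal is essential if it meets every nonzero ideal nontrivially; a nonzero ideal $\langle p_1^{r_1}\cdots p_k^{r_k}\rangle$, $0\le r_i\le m_i$, is essential iff $r_j\ne m_j$ for all $j$). $\overline\Gamma$ denotes the complement of $\Gamma$. *)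

(* Defs.v *)
From mathcomp Require Import all_boot all_order all_algebra.
Set Implicit Arguments. Unset Strict Implicit. Unset Printing Implicit Defensive.
Import GRing.Theory.
Local Open Scope ring_scope.

Section EssentialIdealGraph.
Variable n : nat.
Local Notation R := 'Z_n.

Definition is_ideal (I : {set R}) : bool :=
  [&& (0 : R) \in I,
      [forall x in I, forall y in I, (x + y) \in I],
      [forall x in I, (- x) \in I] &
      [forall r : R, forall x in I, (r * x) \in I]].

Definition zero_ideal : {set R} := [set 0].

Definition ideal_sum (I K : {set R}) : {set R} :=
  [set x + y | x in I, y in K].

Definition essential (I : {set R}) : bool :=
  is_ideal I &&
  [forall K : {set R}, (is_ideal K && (K != zero_ideal)) ==> (I :&: K != zero_ideal)].

Definition EVert : {set {set R}} :=
  [set I : {set R} | [&& is_ideal I, I != zero_ideal & I != [set: R]]].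

Definition compl_adj : rel {set R} :=
  fun I K => [&& I \in EVert, K \in EVert, I != K & ~~ essential (ideal_sum I K)].

Definition compl_connected : Prop :=
  forall I K, I \in EVert -> K \in EVert -> connect compl_adj I K.

End EssentialIdealGraph.

Definition squarefree (n : nat) : bool :=
  [forall p : 'I_n.+1, prime p ==> ~~ (p ^ 2 %| n)%N].

(* Main.v *)
Require Import Defs.
From mathcomp Require Import all_boot all_order all_algebra.
From mathcomp Require Import zify.
Set Implicit Arguments. Unset Strict Implicit. Unset Printing Implicit Defensive.
Import GRing.Theory.

Definition Mset (n d : nat) : {set 'Z_n} := [set x : 'Z_n | (d %| x)%N].

Lemma ZpE n (x : 'Z_n) : x = ((x : nat)%:R)%R.
Proof. by rewrite natr_Zp. Qed.

Lemma inM n d k : (1 < n)%N -> (d %| n)%N -> ((k%:R : 'Z_n)%R \in Mset n d) = (d %| k)%N.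
Proof. by move=> n1 dn; rewrite inE val_Zp_nat // /dvdn modn_dvdm. Qed.

Lemma inM' n d (x : 'Z_n) : (x \in Mset n d) = (d %| x)%N.
Proof. by rewrite inE. Qed.

Lemma M_ideal n d : (1 < n)%N -> (d %| n)%N -> is_ideal (Mset n d).
Proof.
move=> n1 dn.
have mul : forall r x : 'Z_n, x \in Mset n d -> (r * x)%R \in Mset n d.
  move=> r x; rewrite (ZpE r) (ZpE x) -natrM !inM // => h.
  exact: dvdn_mull.
apply/and4P; split.
- by rewrite inM' dvdn0.
- apply/forallP=> x; apply/implyP=> hx; apply/forallP=> y; apply/implyP=> hy.
  move: hx hy; rewrite (ZpE x) (ZpE y) -natrD !inM // => hx hy.
  exact: dvdn_add.
- apply/forallP=> x; apply/implyP=> hx.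
  by rewrite -mulN1r; apply: mul.
- apply/forallP=> r; apply/forallP=> x; apply/implyP=> hx; exact: mul.
Qed.

Lemma idealP n (I : {set 'Z_n}) : is_ideal I ->
  [/\ (0%R \in I), (forall x y, x \in I -> y \in I -> (x + y)%R \in I),
      (forall x, x \in I -> (- x)%R \in I) &
      (forall r x, x \in I -> (r * x)%R \in I)].
Proof.
case/and4P=> h0 /forallP hA /forallP hN /forallP hM; split=> //.
- by move=> x y hx hy; move/implyP: (hA x) => /(_ hx) /forallP /(_ y) /implyP; apply.
- by move=> x hx; move/implyP: (hN x); apply.
- by move=> r x hx; move/forallP: (hM r) => /(_ x) /implyP; apply.
Qed.

Lemma sum_ideal n (I K : {set 'Z_n}) : is_ideal I -> is_ideal K -> is_ideal (ideal_sum I K).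
Proof.
move=> /idealP[I0 IA IN IM] /idealP[K0 KA KN KM].
apply/and4P; split.
- by apply/imset2P; exists 0%R 0%R => //; rewrite addr0.
- apply/forallP=> x; apply/implyP=> /imset2P[a b ha hb ->].
  apply/forallP=> y; apply/implyP=> /imset2P[c e hc he ->].
  apply/imset2P; exists (a + c)%R (b + e)%R; [exact: IA|exact: KA|].
  by rewrite addrACA.
- apply/forallP=> x; apply/implyP=> /imset2P[a b ha hb ->].
  apply/imset2P; exists (- a)%R (- b)%R; [exact: IN|exact: KN|].
  by rewrite opprD.
- apply/forallP=> r; apply/forallP=> x; apply/implyP=> /imset2P[a b ha hb ->].
  apply/imset2P; exists (r * a)%R (r * b)%R; [exact: IM|exact: KM|].
  by rewrite mulrDr.
Qed.

Lemma sub_suml n (I K : {set 'Z_n}) : 0%R \in K -> I \subset ideal_sum I K.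
Proof.
move=> K0; apply/subsetP=> x hx; apply/imset2P; exists x 0%R => //.
by rewrite addr0.
Qed.

Lemma sub_sumr n (I K : {set 'Z_n}) : 0%R \in I -> K \subset ideal_sum I K.
Proof.
move=> I0; apply/subsetP=> x hx; apply/imset2P; exists 0%R x => //.
by rewrite add0r.
Qed.

Lemma sum_sub n (I K J : {set 'Z_n}) : is_ideal J -> I \subset J -> K \subset J ->
  ideal_sum I K \subset J.
Proof.
move=> /idealP[_ JA _ _] IJ KJ; apply/subsetP=> x /imset2P[a b ha hb ->].
by apply: JA; [apply: (subsetP IJ)|apply: (subsetP KJ)].
Qed.

Lemma nz0 n (S : {set 'Z_n}) : 0%R \in S -> (S != zero_ideal n) = [exists x in S, x != 0%R].
Proof.
move=> S0; apply/idP/idP.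
- apply: contraR; rewrite negb_exists_in => /forall_inP h.
  apply/eqP/setP=> x; rewrite inE; apply/idP/idP; first by move=> hx; apply/negPn/h.
  by move/eqP->.
- case/exists_inP=> x hx nx; apply/eqP=> e; move: hx; rewrite e inE.
  by rewrite (negbTE nx).
Qed.

Lemma ess_sup n (I J : {set 'Z_n}) : is_ideal J -> I \subset J -> essential I -> essential J.
Proof.
move=> iJ IJ /andP[iI /forallP h]; apply/andP; split=> //.
apply/forallP=> K; apply/implyP=> hK; move/implyP: (h K) => /(_ hK).
case/andP: hK => /idealP[K0 _ _ _] _.
case/idealP: iJ => J0 _ _ _; case/idealP: iI => I0 _ _ _.
rewrite !nz0 ?inE ?I0 ?J0 ?K0 //.
case/exists_inP=> x; rewrite inE => /andP[xI xK] nx.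
by apply/exists_inP; exists x => //; rewrite inE xK (subsetP IJ).
Qed.

Lemma essT n : essential [set: 'Z_n].
Proof.
apply/andP; split.
- apply/and4P; split; first by rewrite inE.
  + by apply/forallP=> x; apply/implyP=> _; apply/forallP=> y; apply/implyP=> _; rewrite inE.
  + by apply/forallP=> x; apply/implyP=> _; rewrite inE.
  + by apply/forallP=> r; apply/forallP=> x; apply/implyP=> _; rewrite inE.
- by apply/forallP=> K; apply/implyP=> /andP[_ hK]; rewrite setTI.
Qed.
Lemma ideal_char n (I : {set 'Z_n}) : (1 < n)%N -> is_ideal I ->
  exists2 g, (0 < g)%N && (g %| n)%N & I = Mset n g.
Proof.
move=> n1 iI; have [I0 IA IN IM] := idealP iI.
have hP : exists k, (0 < k)%N && ((k%:R : 'Z_n)%R \in I).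
  by exists n; rewrite pchar_Zp // I0 andbT; apply: ltnW.
case: (ex_minnP hP) => g /andP[g0 gI] gmin.
have key : forall k, ((k%:R : 'Z_n)%R \in I) -> (g %| k)%N.
  move=> k hk.
  have e : ((k %% g)%:R : 'Z_n)%R = (k%:R - (k %/ g)%:R * g%:R)%R.
    by rewrite {2}(divn_eq k g) natrD natrM addrC addKr.
  have : ((k %% g)%:R : 'Z_n)%R \in I by rewrite e; apply: IA => //; apply: IN; apply: IM.
  case: (posnP (k %% g)) => [h|h] hin; first by rewrite /dvdn h.
  have := gmin _ (introT andP (conj h hin)).
  by rewrite leqNgt ltn_pmod.
have gn : (g %| n)%N by apply: key; rewrite pchar_Zp.
exists g; first by rewrite g0 gn.
apply/setP=> x; rewrite inM'; apply/idP/idP.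
- by move=> hx; apply: key; rewrite -ZpE.
- move=> gx; rewrite (ZpE x) -(divnK gx) natrM; exact: IM.
Qed.

Lemma ltnZ n (x : 'Z_n) : (1 < n)%N -> (x < n)%N.
Proof. by move=> n1; apply: leq_trans (ltn_ord x) _; rewrite Zp_cast. Qed.

Lemma Zp0E n (x : 'Z_n) : (1 < n)%N -> (x == 0%R) = ((x : nat) == 0%N).
Proof.
move=> n1; apply/eqP/eqP => [->|h]; first by [].
by apply: val_inj.
Qed.

Lemma Mn n : (1 < n)%N -> Mset n n = zero_ideal n.
Proof.
move=> n1; apply/setP=> x; rewrite inM' /zero_ideal inE Zp0E //.
apply/idP/idP; last by move/eqP->; rewrite dvdn0.
move=> h; rewrite eqn0Ngt; apply/negP=> x0.
have := dvdn_leq x0 h; have := ltnZ x n1.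
by move=> a b; move: (leq_trans a b); rewrite ltnn.
Qed.

Lemma M1 n : Mset n 1 = [set: 'Z_n].
Proof. by apply/setP=> x; rewrite inM' dvd1n inE. Qed.

Lemma Mnz n d : (1 < n)%N -> (d %| n)%N -> (0 < d)%N -> (d < n)%N -> Mset n d != zero_ideal n.
Proof.
move=> n1 dn d0 dln; apply/eqP=> e.
have : ((d%:R : 'Z_n)%R \in Mset n d) by rewrite inM.
rewrite e /zero_ideal inE Zp0E // val_Zp_nat // modn_small //.
by case: d d0 {dn dln e}.
Qed.

Lemma MnT n d : (1 < n)%N -> (d %| n)%N -> (1 < d)%N -> Mset n d != [set: 'Z_n].
Proof.
move=> n1 dn d1; apply/eqP=> e.
have : ((1%:R : 'Z_n)%R \in Mset n d) by rewrite e inE.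
rewrite inM // dvdn1; by case: d d1 {dn e} => [|[]].
Qed.

Lemma Psub n (J : {set 'Z_n}) : (1 < n)%N -> is_ideal J -> J != [set: 'Z_n] ->
  exists r, [/\ prime r, (r %| n)%N & J \subset Mset n r].
Proof.
move=> n1 iJ JT; case: (ideal_char n1 iJ) => g /andP[g0 gn] e.
have g1 : (1 < g)%N.
  case: g g0 gn e => [//|[|g]] // _ _ e; by move: JT; rewrite e M1 eqxx.
exists (pdiv g); split.
- exact: pdiv_prime.
- exact: dvdn_trans (pdiv_dvd g) gn.
- rewrite e; apply/subsetP=> x; rewrite !inM' => h.
  exact: dvdn_trans (pdiv_dvd g) h.
Qed.

Lemma divp_facts n p : (1 < n)%N -> prime p -> (p %| n)%N ->
  [/\ (n %/ p %| n)%N, (0 < n %/ p)%N, (n %/ p < n)%N & (n %/ p * p = n)%N].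
Proof.
move=> n1 pp pn; have p1 := prime_gt1 pp.
split.
- by apply/dvdnP; exists p; rewrite mulnC divnK.
- by rewrite divn_gt0 ?(dvdn_leq _ pn) // ?(ltnW p1) // ltnW.
- by rewrite ltn_Pdiv // ltnW.
- by rewrite divnK.
Qed.

Lemma notess n p : (1 < n)%N -> prime p -> (p %| n)%N -> ~~ (p * p %| n)%N ->
  ~~ essential (Mset n p).
Proof.
move=> n1 pp pn npp.
have [d1 d2 d3 d4] := divp_facts n1 pp pn.
apply/negP=> /andP[_ /forallP /(_ (Mset n (n %/ p)))].
rewrite M_ideal // Mnz //= => h.
move: h; apply/negP; rewrite negbK; apply/eqP/setP=> x.
rewrite in_setI /zero_ideal in_set1 !inM'; apply/idP/idP; last by move/eqP->; rewrite !dvdn0.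
case/andP=> h1 h2.
have cp : coprime p (n %/ p).
  rewrite prime_coprime //; apply: contra npp => h.
  by rewrite -[X in (_ %| X)%N]d4 dvdn_mul.
have : (n %| x)%N by rewrite -[X in (X %| _)%N]d4 mulnC Gauss_dvd // h1 h2.
rewrite Zp0E // => h; rewrite eqn0Ngt; apply/negP=> x0.
have := dvdn_leq x0 h; have := ltnZ x n1.
by move=> a b; move: (leq_trans a b); rewrite ltnn.
Qed.

Lemma essp n p : (1 < n)%N -> prime p -> (p * p %| n)%N -> essential (Mset n p).
Proof.
move=> n1 pp ppn.
have pn : (p %| n)%N by apply: dvdn_trans ppn; apply: dvdn_mulr.
apply/andP; split; first exact: M_ideal.
apply/forallP=> L; apply/implyP=> /andP[iL Lnz].
have [L0 LA LN LM] := idealP iL.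
move: Lnz; rewrite !nz0 ?inE ?L0 ?inM' ?dvdn0 //.
case/exists_inP=> x xL x0.
case px: (p %| x)%N.
  by apply/exists_inP; exists x => //; rewrite inE xL inM' px.
apply/exists_inP; exists ((p%:R : 'Z_n) * x)%R.
  by rewrite inE LM // andbT (ZpE x) -natrM inM // dvdn_mulr.
rewrite (ZpE x) -natrM Zp0E // val_Zp_nat //; apply/negP=> /eqP h.
have : (p * p %| p * x)%N by apply: (dvdn_trans ppn); rewrite /dvdn h.
by rewrite dvdn_pmul2l ?prime_gt0 // px.
Qed.

Lemma sqf n p : squarefree n -> (0 < n)%N -> prime p -> ~~ (p * p %| n)%N.
Proof.
move=> /forallP sq n0 pp; apply/negP=> h.
have pn : (p < n.+1)%N.
  rewrite ltnS; apply: dvdn_leq n0 _; apply: dvdn_trans h; exact: dvdn_mulr.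
move/implyP: (sq (Ordinal pn)) => /= /(_ pp); rewrite -mulnn h.
by [].
Qed.

Lemma three_primes n r s u : (0 < n)%N -> prime r -> prime s -> prime u ->
  r != s -> r != u -> s != u -> (r %| n)%N -> (s %| n)%N -> (u %| n)%N ->
  (3 <= size (primes n))%N.
Proof.
move=> n0 pr ps pu rs ru su rn sn un.
have -> : 3 = size [:: r; s; u] by [].
apply: uniq_leq_size.
  by rewrite /= !inE negb_or rs ru su.
by move=> x; rewrite !inE mem_primes => /or3P[]/eqP->; rewrite ?pr ?ps ?pu n0.
Qed.

Lemma only_r n r d : (0 < n)%N -> (size (primes n) < 3)%N ->
  (forall p, prime p -> ~~ (p * p %| n)%N) -> prime r -> (r %| d)%N -> (d %| n)%N ->
  d != n -> d = r.
Proof.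
move=> n0 sz sq pr rd dn dnn.
apply/eqP; apply/negPn/negP => dr.
have d0 : (0 < d)%N by apply: dvdn_gt0 n0 dn.
have r0 := prime_gt0 pr.
set t := d %/ r.
have dt : d = (t * r)%N by rewrite divnK.
have t1 : (1 < t)%N.
  case: t dt => [|[|t]] dt //; [by move: d0; rewrite dt | by move: dr; rewrite dt mul1n eqxx].
set v := n %/ d.
have nv : n = (v * d)%N by rewrite divnK.
have v1 : (1 < v)%N.
  case: v nv => [|[|v]] nv //; [by move: n0; rewrite nv | by move: dnn; rewrite nv mul1n eqxx].
have ps := pdiv_prime t1; have pu := pdiv_prime v1.
set s := pdiv t; set u := pdiv v.
have rsn : (r * s * u %| n)%N.
  rewrite nv mulnC dvdn_mul ?pdiv_dvd // dt mulnC dvdn_mul ?pdiv_dvd //.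
have H : forall a b c, (a * b * c %| n)%N -> (a * b %| n)%N /\ (a * c %| n)%N /\ (b * c %| n)%N.
  move=> a b c h; split; [|split]; apply: dvdn_trans h.
  - exact: dvdn_mulr.
  - by rewrite -mulnA mulnCA dvdn_mull.
  - by rewrite -mulnA dvdn_mull.
have [h1 [h2 h3]] := H _ _ _ rsn.
have dv : forall a b, (a * b %| n)%N -> (a %| n)%N /\ (b %| n)%N.
  by move=> a b h; split; apply: dvdn_trans h; [apply: dvdn_mulr|apply: dvdn_mull].
suff : (3 <= size (primes n))%N by rewrite leqNgt sz.
apply: (three_primes n0 pr ps pu _ _ _ (dv _ _ h1).1 (dv _ _ h1).2 (dv _ _ h2).2).
- by apply/eqP=> e; move: (sq _ pr); rewrite {2}e h1.
- by apply/eqP=> e; move: (sq _ pr); rewrite {2}e h2.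
- by apply/eqP=> e; move: (sq _ ps); rewrite {2}e h3.
Qed.

Lemma third n p q : (3 <= size (primes n))%N ->
  exists r, [/\ prime r, (r %| n)%N, r != p & r != q].
Proof.
move=> sz.
case: (boolP (has (fun r => (r != p) && (r != q)) (primes n))).
  case/hasP=> r; rewrite mem_primes => /and3P[pr _ rn] /andP[a b].
  by exists r.
move/hasPn=> h; exfalso.
have : (size (primes n) <= size [:: p; q])%N.
  apply: uniq_leq_size; first exact: primes_uniq.
  move=> x /h; rewrite negb_and !negbK !inE => /orP[]->; by rewrite ?orbT.
by rewrite leqNgt /= (leq_trans _ sz).
Qed.

Lemma vertP n (I : {set 'Z_n}) : I \in EVert n ->
  [/\ is_ideal I, I != zero_ideal n & I != [set: 'Z_n]].
Proof. by rewrite inE => /and3P[]. Qed.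

Lemma vertI n (I : {set 'Z_n}) : is_ideal I -> I != zero_ideal n -> I != [set: 'Z_n] ->
  I \in EVert n.
Proof. by move=> a b c; rewrite inE a b c. Qed.

Lemma first_step n (I K : {set 'Z_n}) : connect (@compl_adj n) I K -> I != K ->
  exists y, @compl_adj n I y.
Proof.
case/connectP=> [[|y s]] /=; first by move=> _ ->; rewrite eqxx.
by case/andP=> h _ _ _; exists y.
Qed.

Lemma other n (I : {set 'Z_n}) : (2 <= #|EVert n|)%N ->
  exists K, K \in EVert n /\ K != I.
Proof.
move=> c2; case: (pickP [pred K | (K \in EVert n) && (K != I)]) => [K /andP[a b]|none].
  by exists K.
have : EVert n \subset [set I].
  apply/subsetP=> K hK; rewrite inE; move: (none K) => /= /negbT.
  by rewrite hK /= negbK.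
move/subset_leq_card; rewrite cards1 => h; move: (leq_trans c2 h).
by [].
Qed.

Lemma SP n p (A B : {set 'Z_n}) : (1 < n)%N -> prime p -> (p %| n)%N -> ~~ (p * p %| n)%N ->
  A \in EVert n -> B \in EVert n -> A \subset Mset n p -> B \subset Mset n p ->
  connect (@compl_adj n) A B.
Proof.
move=> n1 pp pn npp vA vB hA hB.
case: (eqVneq A B) => [->|ne]; first exact: connect0.
apply: connect1; rewrite /compl_adj vA vB ne /=.
apply/negP=> ess; move: (notess n1 pp pn npp); apply/negP; rewrite negbK.
apply: ess_sup ess; first exact: M_ideal.
exact: sum_sub (M_ideal n1 pn) hA hB.
Qed.

Theorem mainTheorem14 (n : nat) :
  (1 < n)%N -> (2 <= #|EVert n|)%N ->
  (compl_connected n <-> (squarefree n /\ (3 <= size (primes n))%N)).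
Proof.
move=> n1 c2; have n0 : (0 < n)%N by apply: ltnW.
have [I0 vI0] : exists I, I \in EVert n.
  have : (0 < #|EVert n|)%N by apply: leq_trans c2.
  by rewrite card_gt0 => /set0Pn.
split.
- move=> C.
  have sq : squarefree n.
    apply/forallP=> p; apply/implyP=> pp; apply/negP=> hp2.
    have ppn : (p * p %| n)%N by rewrite mulnn.
    have pn : (p %| n)%N by apply: dvdn_trans ppn; exact: dvdn_mulr.
    have p1 := prime_gt1 pp.
    have pln : (p < n)%N.
      apply: (@leq_trans (p * p)); last exact: dvdn_leq.
      by rewrite -{1}(muln1 p) ltn_pmul2l // ltnW.
    have vP : Mset n p \in EVert n.
      by apply: vertI; [exact: M_ideal|apply: Mnz => //; exact: ltnW|exact: MnT].
    have [K [vK nK]] := other (Mset n p) c2.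
    have ne : Mset n p != K by rewrite eq_sym.
    have [y] := first_step (C _ _ vP vK) ne.
    case/and4P=> _ vy _; apply/negP; rewrite negbK.
    have [iy _ _] := vertP vy.
    apply: ess_sup (essp n1 pp ppn); first exact: sum_ideal (M_ideal n1 pn) iy.
    by apply: sub_suml; case/idealP: iy.
  split=> //.
  rewrite leqNgt; apply/negP=> sz.
  have sqn := fun p => @sqf n p sq n0.
  have [K [vK nK]] := other I0 c2.
  have ne : I0 != K by rewrite eq_sym.
  have [y] := first_step (C _ _ vI0 vK) ne.
  case/and4P=> vI vy Iy ness.
  have [iI I0z I0T] := vertP vI; have [iy yz yT] := vertP vy.
  have iS := sum_ideal iI iy.
  have ST : ideal_sum I0 y != [set: 'Z_n].
    by apply: contra ness => /eqP ->; exact: essT.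
  have [r [pr rn Sr]] := Psub n1 iS ST.
  have toR : forall J : {set 'Z_n}, J \in EVert n -> J \subset Mset n r -> J = Mset n r.
    move=> J vJ JS; have [iJ Jz JT] := vertP vJ.
    have [d /andP[d0 dn] eJ] := ideal_char n1 iJ.
    have rd : (r %| d)%N.
      have : ((d%:R : 'Z_n)%R \in Mset n r) by rewrite (subsetP JS) // eJ inM.
      by rewrite inM.
    have dnn : d != n by apply: contra Jz => /eqP e; rewrite eJ e Mn.
    by rewrite eJ (only_r n0 sz sqn pr rd dn dnn).
  have [y0 _ _ _] := idealP iy; have [i0 _ _ _] := idealP iI.
  have e1 := toR _ vI (subset_trans (sub_suml _ y0) Sr).
  have e2 := toR _ vy (subset_trans (sub_sumr _ i0) Sr).
  by move: Iy; rewrite e1 e2 eqxx.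
- case=> sq sz I K vI vK.
  have sqn := fun p => @sqf n p sq n0.
  have [iI _ IT] := vertP vI; have [iK _ KT] := vertP vK.
  have [p [pp pn Ip]] := Psub n1 iI IT.
  have [q [pq qn Kq]] := Psub n1 iK KT.
  case: (eqVneq p q) => [epq|npq].
    by apply: (SP n1 pp pn (sqn _ pp) vI vK Ip); rewrite epq.
  have [r [pr rn rp rq]] := third p q sz.
  have cpq : coprime p q by rewrite prime_coprime // dvdn_prime2 // npq.
  have pqn : (p * q %| n)%N by rewrite Gauss_dvd // pn qn.
  have pqnn : (p * q != n).
    apply/eqP=> e; move: rn; rewrite -e Euclid_dvdM // !dvdn_prime2 //.
    by rewrite (negbTE rp) (negbTE rq).
  have p1 := prime_gt1 pp; have q1 := prime_gt1 pq.
  have pq1 : (1 < p * q)%N by rewrite (@leq_trans q) // leq_pmull // ltnW.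
  have vV : Mset n (p * q) \in EVert n.
    apply: vertI; [exact: M_ideal|apply: Mnz => //; first exact: ltnW|exact: MnT].
    by rewrite ltn_neqAle pqnn dvdn_leq.
  have Vp : Mset n (p * q) \subset Mset n p.
    by apply/subsetP=> x; rewrite !inM' => h; apply: dvdn_trans h; exact: dvdn_mulr.
  have Vq : Mset n (p * q) \subset Mset n q.
    by apply/subsetP=> x; rewrite !inM' => h; apply: dvdn_trans h; exact: dvdn_mull.
  apply: (connect_trans (SP n1 pp pn (sqn _ pp) vI vV Ip Vp)).
  exact: (SP n1 pq qn (sqn _ pq) vV vK Vq Kq).
Qed.
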